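(* Let $n \ge 2$ and let $\mathcal{P} = \langle x, y \mid x^n y^{-2}, R\rangle$, $R \in F(x,y)$, be a regular presentation of $Q_{4n}$. Then there exist an integer $k \ge 0$ and nonzero integers $n_1, m_1, \dots, n_k, m_k$ such that $\mathcal{P} \simeq_Q \mathcal{P}_n(n_1,\dots,n_k;m_1,\dots,m_k)$.
   Context: $Q_{4n}$ is identified with $\langle x, y \mid x^n y^{-2}, xyxy^{-1} \rangle$ and $F(x,y)$ is the free group on $x,y$. A presentation $\langle x, y \mid x^n y^{-2}, R\rangle$ is regular if the map $x \mapsto x$, $y \mapsto y$ induces a group isomorphism from the group it presents to $Q_{4n}$. For integers $k\ge 0$, $n_1,\dots,n_k,m_1,\dots,m_k$, with $n_{k+1} = 1 - \sum_{i=1}^k n_i$, $m_{k+1} = 1 - \sum_{i=1}^k m_i$, $\mathcal{P}_n(n_1,\dots,n_k;m_1,\dots,m_k) = \langle x, y \mid x^n y^{-2},\ x^{n_1} y x^{m_1} y^{-1} \cdots x^{n_{k+1}} y x^{m_{k+1}} y^{-1} \rangle$. Two finite presentations on the same generators are $Q$-equivalent ($\simeq_Q$) if related by a finite sequence of the moves: replace a relator $r_i$ by $r_ir_j$ ($j\neq i$); replace $r_i$ by $r_i^{-1}$; replace $r_i$ by $wr_iw^{-1}$ for some $w$ in the free group on the generators. *)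

(* Defs.v *)
From mathcomp Require Import all_boot all_order all_algebra.
From Stdlib Require Import Relations.
Set Implicit Arguments. Unset Strict Implicit. Unset Printing Implicit Defensive.
Import GRing.Theory Num.Theory.

(* A letter: (generator, inverse flag); generator false = x, true = y. *)
Definition letter := (bool * bool)%type.
Definition word := seq letter.

Definition linv (a : letter) : letter := (a.1, ~~ a.2).

Definition reduce (w : word) : word :=
  foldr (fun a v => match v with
                    | b :: v' => if b == linv a then v' else a :: v
                    | [::] => [:: a]
                    end) [::] w.

Definition fmul (u v : word) : word := reduce (u ++ v).
Definition finv (u : word) : word := rev (map linv u).
Definition fconj (w r : word) : word := reduce (w ++ r ++ finv w).

Definition X : letter := (false, false).
Definition Y : letter := (true, false).

Definition xpow (z : int) : word :=
  if (0 <= z)%R then nseq `|z|%N X else nseq `|z|%N (linv X).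

Definition rel1 (n : nat) : word := reduce (nseq n X ++ nseq 2 (linv Y)).
Definition relQ : word := reduce [:: X; Y; X; linv Y].

Inductive ncl (S : seq word) : word -> Prop :=
| ncl_one : ncl S [::]
| ncl_step (s u v : word) (e : bool) :
    s \in S -> ncl S v ->
    ncl S (reduce (u ++ (if e then finv s else s) ++ finv u ++ v)).

(* <x,y | x^n y^{-2}, R> is regular: the identity on x, y induces an
   isomorphism onto Q_{4n} = <x,y | x^n y^{-2}, xyxy^{-1}>, i.e. the two
   normal closures in F(x,y) coincide. *)
Definition regular (n : nat) (R : word) : Prop :=
  forall w : word,
    ncl [:: rel1 n; reduce R] (reduce w) <-> ncl [:: rel1 n; relQ] (reduce w).

Inductive qmove : seq word -> seq word -> Prop :=
| qm_mul (P : seq word) (i j : nat) :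
    i < size P -> j < size P -> i != j ->
    qmove P (set_nth [::] P i (fmul (nth [::] P i) (nth [::] P j)))
| qm_inv (P : seq word) (i : nat) :
    i < size P ->
    qmove P (set_nth [::] P i (reduce (finv (nth [::] P i))))
| qm_conj (P : seq word) (i : nat) (w : word) :
    i < size P ->
    qmove P (set_nth [::] P i (fconj w (nth [::] P i))).

Definition Qeq : seq word -> seq word -> Prop := clos_refl_trans _ qmove.

Definition Pn_block (a b : int) : word := xpow a ++ [:: Y] ++ xpow b ++ [:: linv Y].

Definition Pn_rel (ns ms : seq int) : word :=
  let nk1 := (1 - \sum_(z <- ns) z)%R in
  let mk1 := (1 - \sum_(z <- ms) z)%R in
  reduce (flatten [seq Pn_block p.1 p.2 | p <- zip ns ms] ++ Pn_block nk1 mk1).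

Definition Pn_pres (n : nat) (ns ms : seq int) : seq word :=
  [:: rel1 n; Pn_rel ns ms].

(* Main.v *)
From Pilot Require Import Defs.
From mathcomp Require Import all_boot all_order all_algebra.
From mathcomp Require Import zify ring.
From Stdlib Require Import Relations.
Import Pilot.Defs.
Set Implicit Arguments. Unset Strict Implicit. Unset Printing Implicit Defensive.
Import GRing.Theory Num.Theory.

Definition stp (a : letter) (v : word) : word :=
  match v with
  | b :: v' => if b == linv a then v' else a :: v
  | [::] => [:: a]
  end.

Lemma reduceE w : reduce w = foldr stp [::] w.
Proof. by []. Qed.

Lemma reduce_cons a w : reduce (a :: w) = stp a (reduce w).
Proof. by []. Qed.

Lemma reduce_cat u v : reduce (u ++ v) = foldr stp (reduce v) u.
Proof. by rewrite reduceE foldr_cat. Qed.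

Lemma linvK : involutive linv.
Proof. by case=> a b; rewrite /linv /= negbK. Qed.

Fixpoint reduced (w : word) : bool :=
  match w with
  | a :: ((b :: _) as w') => (b != linv a) && reduced w'
  | _ => true
  end.

Lemma reduced_stp a v : reduced v -> reduced (stp a v).
Proof.
case: v => [|b v] //= H.
case: ifP => [_|/negbT ne]; first by case: v H => //= c v /andP[].
by rewrite /= ne.
Qed.

Lemma reduced_foldr u v : reduced v -> reduced (foldr stp v u).
Proof. by elim: u => //= a u IH /IH; apply: reduced_stp. Qed.

Lemma reduced_reduce w : reduced (reduce w).
Proof. by rewrite reduceE; apply: reduced_foldr. Qed.

Lemma reduce_id v : reduced v -> reduce v = v.
Proof.
elim: v => // a v IH H; rewrite reduce_cons IH; last by case: v H IH => //= b v /andP[].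
case: v H {IH} => //= b v /andP[ne _]; by rewrite (negbTE ne).
Qed.

Lemma reduceK w : reduce (reduce w) = reduce w.
Proof. exact/reduce_id/reduced_reduce. Qed.

Lemma stpK a v : reduced v -> stp a (stp (linv a) v) = v.
Proof.
case: v => [|b v] /=; first by rewrite eqxx.
rewrite linvK; case: eqP => [->|ne] H.
  case: v H => [|c v] /=; first by [].
  by case/andP=> ne' _; rewrite (negbTE ne').
by rewrite /= eqxx.
Qed.

Lemma foldr_reduce u v : reduced v -> foldr stp v (reduce u) = foldr stp v u.
Proof.
move=> Hv; elim: u => // a u IH.
rewrite reduce_cons [foldr _ _ (a :: u)]/= -IH.
case E: (reduce u) => [|b t] /=; first by [].
case: eqP => [eb|] //=.
have := reduced_foldr t Hv => Ht.
by rewrite eb stpK.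
Qed.

Lemma reduce_catl u v : reduce (reduce u ++ v) = reduce (u ++ v).
Proof. by rewrite !reduce_cat foldr_reduce // reduced_reduce. Qed.

Lemma reduce_catr u v : reduce (u ++ reduce v) = reduce (u ++ v).
Proof. by rewrite !reduce_cat reduceK. Qed.

Lemma reduce_ctx u a b v : reduce a = reduce b ->
  reduce (u ++ a ++ v) = reduce (u ++ b ++ v).
Proof.
move=> H; by rewrite -(reduce_catr u (a ++ v)) -(reduce_catl a v) H reduce_catl reduce_catr.
Qed.

Lemma reduce_pair a : reduce [:: a; linv a] = [::].
Proof. by rewrite /= eqxx. Qed.

Lemma finv_cat u v : finv (u ++ v) = finv v ++ finv u.
Proof. by rewrite /finv map_cat rev_cat. Qed.

Lemma finvK : involutive finv.
Proof. by move=> w; rewrite /finv map_rev revK (mapK linvK). Qed.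

Lemma finv_cons a w : finv (a :: w) = finv w ++ [:: linv a].
Proof. by rewrite -cat1s finv_cat. Qed.

Lemma reduce_wfw w : reduce (w ++ finv w) = [::].
Proof.
elim: w => // a w IH.
rewrite finv_cons /= catA -reduce_catl IH /=.
by rewrite eqxx.
Qed.

Lemma reduce_fww w : reduce (finv w ++ w) = [::].
Proof. by rewrite -{2}(finvK w) reduce_wfw. Qed.

Lemma reduce_finv w : reduce (finv (reduce w)) = reduce (finv w).
Proof.
elim: w => // a w IH.
rewrite reduce_cons finv_cons -reduce_catl -IH reduce_catl.
case E: (reduce w) => [|b t] /=; first by [].
case: eqP => [->|_]; last by rewrite finv_cons.
rewrite !finv_cons linvK -catA -{1}(cats0 (finv t)).
by rewrite -(cats0 (_ ++ _)) -catA (reduce_ctx _ _ (reduce_pair _ : _ = reduce [::])) !cats0.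
Qed.

Local Open Scope ring_scope.

Lemma reduced_cons a b w : reduced [:: a, b & w] = (b != linv a) && reduced (b :: w).
Proof. by []. Qed.

Lemma rel1E n : rel1 n = nseq n X ++ [:: linv Y; linv Y].
Proof.
rewrite /rel1 reduce_id //.
by elim: n => // -[|n] IH //.
Qed.

Lemma finv_rel1 n : finv (rel1 n) = [:: Y; Y] ++ nseq n (linv X).
Proof.
rewrite rel1E finv_cat /finv /= map_nseq.
by rewrite rev_nseq.
Qed.

Definition lw (n : nat) (a : letter) : int :=
  match a with
  | (false, false) => 2
  | (false, true) => -2
  | (true, false) => n%:Z
  | (true, true) => - n%:Z
  end.

Definition weight n (w : word) : int := foldr (fun a s => lw n a + s) 0 w.

Lemma weight_cat n u v : weight n (u ++ v) = weight n u + weight n v.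
Proof. by elim: u => /= [|a u ->]; rewrite ?add0r ?addrA. Qed.

Lemma weight_cons n a w : weight n (a :: w) = lw n a + weight n w.
Proof. by []. Qed.

Lemma lw_linv n a : lw n (linv a) = - lw n a.
Proof. by case: a => [[] []] /=; rewrite ?opprK. Qed.

Lemma weight_stp n a v : weight n (stp a v) = lw n a + weight n v.
Proof.
case: v => [|b v]; first by [].
rewrite [stp _ _]/=; case: eqP => [->|] //.
by rewrite weight_cons lw_linv addrA addrN add0r.
Qed.

Lemma weight_reduce n w : weight n (reduce w) = weight n w.
Proof. by elim: w => // a w IH; rewrite reduce_cons weight_stp IH. Qed.

Lemma weight_finv n w : weight n (finv w) = - weight n w.
Proof.
elim: w => [|a w IH]; first by rewrite /= oppr0.
rewrite finv_cons weight_cat IH weight_cons lw_linv /=; lia.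
Qed.

Lemma weight_rel1 n : weight n (rel1 n) = 0.
Proof.
rewrite rel1E weight_cat /=.
have ->: weight n (nseq n X) = 2 * n%:Z.
  suff H: forall m, weight n (nseq m X) = 2 * m%:Z by [].
  elim=> [|m IH] //=; rewrite IH; lia.
rewrite addr0; lia.
Qed.

Section Ev.
Variable n : nat.
Hypothesis hn : (1 < 2 * n)%N.

Definition st := ('Z_(2 * n) * bool)%type.

Definition act (a : letter) (s : st) : st :=
  let: (z, e) := s in
  match a with
  | (false, false) => (z + 1, e)
  | (false, true) => (z - 1, e)
  | (true, false) => if e then (n%:R - z, false) else (- z, true)
  | (true, true) => if e then (- z, false) else (- z - n%:R, true)
  end.

Definition ev (w : word) (s : st) : st := foldr act s w.

Lemma Zdbl (x : 'Z_(2 * n)) : x + n%:R + n%:R = x.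
Proof. by rewrite -addrA -natrD addnn -mul2n pchar_Zp // addr0. Qed.

Lemma Zdbl' (x : 'Z_(2 * n)) : x - n%:R - n%:R = x.
Proof. rewrite -{1}(Zdbl x); ring. Qed.

Ltac zsolve := first [ring | (rewrite -[RHS](Zdbl); ring) | (rewrite -[RHS](Zdbl'); ring)].

Lemma act_linvK a s : act a (act (linv a) s) = s.
Proof.
case: s => z e; case: a => [[] []]; case: e => /=; congr (_, _); zsolve.
Qed.

Lemma ev_cat u v s : ev (u ++ v) s = ev u (ev v s).
Proof. by rewrite /ev foldr_cat. Qed.

Lemma ev_stp a v s : ev (stp a v) s = act a (ev v s).
Proof.
case: v => [|b v] //; rewrite [stp _ _]/=; case: eqP => [->|] //.
by rewrite [ev (_ :: _) _]/= act_linvK.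
Qed.

Lemma ev_reduce w s : ev (reduce w) s = ev w s.
Proof. by elim: w => // a w IH; rewrite reduce_cons ev_stp IH. Qed.

Lemma ev_finvK w s : ev (finv w) (ev w s) = s.
Proof. by rewrite -ev_cat -ev_reduce reduce_fww. Qed.

Lemma ev_Kfinv w s : ev w (ev (finv w) s) = s.
Proof. by rewrite -ev_cat -ev_reduce reduce_wfw. Qed.

Lemma ev_nseqX m z e : ev (nseq m X) (z, e) = (z + m%:R, e).
Proof.
elim: m => [|m IH] /=; first by rewrite addr0.
by rewrite IH /= -addrA -mulrSr.
Qed.

Lemma ev_nseqXi m z e : ev (nseq m (linv X)) (z, e) = (z - m%:R, e).
Proof.
elim: m => [|m IH] /=; first by rewrite subr0.
by rewrite IH /= -addrA -opprD -mulrSr.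
Qed.

Lemma ev_xpow c z e : ev (xpow c) (z, e) = (z + c%:~R, e).
Proof.
case: c => m; rewrite /xpow /=; first by rewrite ev_nseqX.
rewrite ev_nseqXi /= NegzE mulrNz -pmulrn mulrSr; congr (_,_); ring.
Qed.

Definition evid w := forall s, ev w s = s.

Lemma evid_rel1 : evid (rel1 n).
Proof.
move=> [z e]; rewrite rel1E ev_cat; case: e => /=; rewrite ev_nseqX; congr (_, _); zsolve.
Qed.

Lemma evid_relQ : evid relQ.
Proof.
have ->: relQ = [:: X; Y; X; linv Y] by [].
move=> [z e]; case: e => /=; congr (_, _); zsolve.
Qed.

End Ev.

Local Close Scope ring_scope.

Local Open Scope ring_scope.

Lemma red_cancel u v a : reduce (u ++ a :: linv a :: v) = reduce (u ++ v).
Proof.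
have := @reduce_ctx u [:: a; linv a] [::] v (reduce_pair a).
by rewrite /=.
Qed.

Lemma red_cancel' u v a : reduce (u ++ linv a :: a :: v) = reduce (u ++ v).
Proof. by rewrite -{2}(linvK a) red_cancel. Qed.

Lemma xpowP m : xpow (Posz m) = nseq m X. Proof. by []. Qed.
Lemma xpowN m : xpow (Negz m) = nseq m.+1 (linv X). Proof. by []. Qed.

Lemma nseqSr T m (x : T) : nseq m.+1 x = nseq m x ++ [:: x].
Proof. by rewrite -addn1 nseqD. Qed.

Lemma xpow_S a : reduce (xpow a ++ [:: X]) = reduce (xpow (a + 1)).
Proof.
case: a => m.
  have ->: Posz m + 1 = Posz m.+1 by lia.
  by rewrite !xpowP nseqSr.
case: m => [|k]; first by [].
have ->: Negz k.+1 + 1 = Negz k by lia.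
rewrite !xpowN (nseqSr k.+1) -catA -[[:: linv X] ++ [:: X]]/[:: linv X; X].
by rewrite red_cancel' cats0.
Qed.

Lemma xpow_P a : reduce (xpow a ++ [:: linv X]) = reduce (xpow (a - 1)).
Proof.
case: a => m; last first.
  have ->: Negz m - 1 = Negz m.+1 by lia.
  by rewrite !xpowN (nseqSr m.+1).
case: m => [|k]; first by [].
have ->: Posz k.+1 - 1 = Posz k by lia.
rewrite !xpowP (nseqSr k) -catA -[[:: X] ++ [:: linv X]]/[:: X; linv X].
by rewrite red_cancel cats0.
Qed.

Lemma xpow_addn a m : reduce (xpow a ++ nseq m X) = reduce (xpow (a + m%:Z)).
Proof.
elim: m a => [|m IH] a; first by rewrite cats0 addr0.
rewrite /= -cat1s catA -reduce_catl xpow_S reduce_catl IH.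
congr (reduce (xpow _)); lia.
Qed.

Lemma xpow_subn a m : reduce (xpow a ++ nseq m (linv X)) = reduce (xpow (a - m%:Z)).
Proof.
elim: m a => [|m IH] a; first by rewrite cats0 subr0.
rewrite /= -cat1s catA -reduce_catl xpow_P reduce_catl IH.
congr (reduce (xpow _)); lia.
Qed.

Lemma xpow_add a b : reduce (xpow a ++ xpow b) = reduce (xpow (a + b)).
Proof.
case: b => m; first by rewrite xpowP xpow_addn.
rewrite xpowN xpow_subn; congr (reduce (xpow _)); lia.
Qed.

Lemma xpow0 : xpow 0 = [::]. Proof. by []. Qed.

Lemma xpowNn (m : nat) : xpow (- m%:Z) = nseq m (linv X).
Proof. by case: m. Qed.

Lemma weight_xpow n c : weight n (xpow c) = 2 * c.
Proof.
have hX : forall m, weight n (nseq m X) = 2 * m%:Z.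
  by elim=> [|m IH] //=; rewrite IH; lia.
have hXi : forall m, weight n (nseq m (linv X)) = - 2 * m%:Z.
  by elim=> [|m IH] //=; rewrite IH; lia.
case: c => m; first by rewrite xpowP hX.
rewrite xpowN hXi NegzE; lia.
Qed.

Lemma ncl_mem S s : s \in S -> reduced s -> ncl S s.
Proof.
move=> Hs Hr.
have := ncl_step [::] false Hs (ncl_one S).
by rewrite /= cats0 reduce_id.
Qed.

Lemma ncl_weight n S d w : ncl S w ->
  (forall s, s \in S -> (d %| weight n s)%Z) -> (d %| weight n w)%Z.
Proof.
move=> H HS; elim: H => [|s u v e Hs _ IH]; first by rewrite dvdz0.
rewrite weight_reduce !weight_cat weight_finv.
have Hd := HS s Hs.
have Hd' : (d %| weight n (if e then finv s else s))%Z.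
  by case: e; rewrite ?weight_finv ?rpredN.
have ->: weight n u + (weight n (if e then finv s else s) + (- weight n u + weight n v)) =
  weight n (if e then finv s else s) + weight n v by ring.
by apply: rpredD.
Qed.

Lemma ncl_evid n (hn : (1 < 2 * n)%N) S w : ncl S w ->
  (forall s, s \in S -> evid n s) -> evid n w.
Proof.
move=> H HS; elim: H => [|s u v e Hs _ IH] st0; first by [].
rewrite ev_reduce // !ev_cat IH.
have Hd : ev (if e then finv s else s) (ev (finv u) st0) = ev (finv u) st0.
  case: e; last exact: HS.
  by rewrite -{1}(HS s Hs (ev (finv u) st0)) ev_finvK.
by rewrite Hd ev_Kfinv.
Qed.

Local Close Scope ring_scope.

Local Open Scope ring_scope.

Lemma red_wfw a w b : reduce (a ++ w ++ finv w ++ b) = reduce (a ++ b).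
Proof. by have := @reduce_ctx a (w ++ finv w) [::] b (reduce_wfw w); rewrite -catA. Qed.

Lemma red_fww a w b : reduce (a ++ finv w ++ w ++ b) = reduce (a ++ b).
Proof. by have := @reduce_ctx a (finv w ++ w) [::] b (reduce_fww w); rewrite -catA. Qed.

Ltac red_by H := let h := fresh in have h := H;
  rewrite ?cats0 ?cat0s -?catA in h *; exact h.

Section Rel.
Variable n : nat.
Hypothesis hn : (1 < 2 * n)%N.

Definition Inv w := weight n w = 4 /\ evid n w.

Definition Rel a b :=
  Qeq [:: rel1 n; reduce a] [:: rel1 n; reduce b] /\ (Inv a -> Inv b).

Lemma Inv_red a b : reduce a = reduce b -> Inv a -> Inv b.
Proof.
move=> E [H1 H2]; split.
  by rewrite -weight_reduce -E weight_reduce.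
by move=> s; rewrite -ev_reduce // -E ev_reduce.
Qed.

Lemma Rel_refl a : Rel a a.
Proof. by split=> //; apply: rt_refl. Qed.

Lemma Rel_trans a b c : Rel a b -> Rel b c -> Rel a c.
Proof.
move=> [H1 H2] [H3 H4]; split; last by move=> /H2 /H4.
exact: rt_trans H3.
Qed.

Lemma Rel_red a b : reduce a = reduce b -> Rel a b.
Proof. by move=> E; split; [rewrite E; apply: rt_refl | apply: Inv_red]. Qed.

Lemma Rel_conj w a : Rel a (w ++ a ++ finv w).
Proof.
split.
  apply: rt_step.
  have := @qm_conj [:: rel1 n; reduce a] 1 w erefl.
  by rewrite /= /fconj (@reduce_ctx w (reduce a) a) // reduceK.
move=> [H1 H2]; split.
  by rewrite !weight_cat weight_finv H1; ring.
by move=> s; rewrite !ev_cat H2 ev_Kfinv.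
Qed.

Lemma Rel_mulr a : Rel a (a ++ rel1 n).
Proof.
split.
  apply: rt_step.
  have := @qm_mul [:: rel1 n; reduce a] 1 0 erefl erefl erefl.
  by rewrite /= /fmul reduce_catl.
move=> [H1 H2]; split.
  by rewrite !weight_cat weight_rel1 H1 addr0.
by move=> s; rewrite !ev_cat evid_rel1.
Qed.

Lemma Rel_mulri a : Rel a (a ++ finv (rel1 n)).
Proof.
split.
  apply: rt_trans; first apply: rt_step.
    exact: (@qm_inv [:: rel1 n; reduce a] 0 erefl).
  apply: rt_trans; first apply: rt_step.
    exact: (@qm_mul [:: reduce (finv (rel1 n)); reduce a] 1 0 erefl erefl erefl).
  apply: rt_trans; first apply: rt_step.
    exact: (@qm_inv [:: reduce (finv (rel1 n));
              fmul (reduce a) (reduce (finv (rel1 n)))] 0 erefl).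
  rewrite /= reduce_finv finvK /rel1 reduceK -/(rel1 n).
  by rewrite /fmul reduce_catl reduce_catr; apply: rt_refl.
move=> [H1 H2]; split.
  by rewrite !weight_cat weight_finv weight_rel1 H1 oppr0 addr0.
move=> s; rewrite !ev_cat.
by rewrite -{1}(evid_rel1 hn s) ev_finvK.
Qed.

Lemma Rel_ins u v : Rel (u ++ v) (u ++ rel1 n ++ v).
Proof.
apply: Rel_trans; first exact: (Rel_conj v).
apply: (@Rel_trans _ (v ++ u)).
  by apply: Rel_red; red_by (red_wfw (v ++ u) v [::]).
apply: Rel_trans; first exact: Rel_mulr.
apply: Rel_trans; first exact: (Rel_conj (finv v)).
apply: Rel_red; rewrite finvK.
red_by (red_fww [::] v (u ++ rel1 n ++ v)).
Qed.
Lemma Rel_insi u v : Rel (u ++ v) (u ++ finv (rel1 n) ++ v).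
Proof.
apply: Rel_trans; first exact: (Rel_conj v).
apply: (@Rel_trans _ (v ++ u)).
  by apply: Rel_red; red_by (red_wfw (v ++ u) v [::]).
apply: Rel_trans; first exact: Rel_mulri.
apply: Rel_trans; first exact: (Rel_conj (finv v)).
apply: Rel_red; rewrite finvK.
red_by (red_fww [::] v (u ++ finv (rel1 n) ++ v)).
Qed.

Lemma Rel_rot p q : Rel (p ++ q) (q ++ p).
Proof.
apply: Rel_trans; first exact: (Rel_conj (finv p)).
apply: Rel_red; rewrite finvK.
red_by (red_fww [::] p (q ++ p)).
Qed.
End Rel.

Lemma rc_cat u w1 w2 : reduce w1 = reduce w2 -> reduce (u ++ w1) = reduce (u ++ w2).
Proof. by move=> E; rewrite -reduce_catr E reduce_catr. Qed.

Lemma rc_cons a w1 w2 : reduce w1 = reduce w2 -> reduce (a :: w1) = reduce (a :: w2).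
Proof. by move=> E; rewrite !reduce_cons E. Qed.

Lemma rc_pair a w : reduce (a :: linv a :: w) = reduce w.
Proof. by have := red_cancel [::] w a. Qed.

Lemma rc_pair' a w : reduce (linv a :: a :: w) = reduce w.
Proof. by have := red_cancel' [::] w a. Qed.


Local Close Scope ring_scope.

Local Open Scope ring_scope.

Definition W (L : seq (int * int)) : word := flatten [seq Pn_block p.1 p.2 | p <- L].

Lemma W_cons b L : W (b :: L) = Pn_block b.1 b.2 ++ W L.
Proof. by []. Qed.

Lemma W_cat L1 L2 : W (L1 ++ L2) = W L1 ++ W L2.
Proof. by rewrite /W map_cat flatten_cat. Qed.

Lemma W_rcons L b : W (rcons L b) = W L ++ Pn_block b.1 b.2.
Proof. by rewrite -cats1 W_cat /W /= cats0. Qed.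

Definition nstep (n : nat) (p : seq (int * int) * bool) (a : letter) :=
  let: (L, e) := p in
  match e, a with
  | false, (false, false) => (rcons L (Posz 1, Posz 0), false)
  | false, (false, true) => (rcons L (Negz 0, Posz 0), false)
  | false, (true, false) => (L, true)
  | false, (true, true) => (rcons L (Posz 0, - n%:Z), true)
  | true, (false, false) => (rcons L (Posz 0, Posz 1), true)
  | true, (false, true) => (rcons L (Posz 0, Negz 0), true)
  | true, (true, false) => (rcons L (n%:Z, Posz 0), false)
  | true, (true, true) => (L, false)
  end.

Definition nf n (w : word) := foldl (nstep n) ([::], false) w.

Definition ye (e : bool) : word := if e then [:: Y] else [::].

Section NF.
Variable n : nat.
Hypothesis hn : (1 < 2 * n)%N.

Lemma xpowZ0 : xpow (Posz 0) = [::]. Proof. by []. Qed.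
Lemma xpow1 : xpow (Posz 1) = [:: X]. Proof. by []. Qed.
Lemma xpowm1 : xpow (Negz 0) = [:: linv X]. Proof. by []. Qed.

Ltac wnorm := rewrite ?W_rcons /Pn_block ?xpowZ0 ?xpow1 ?xpowm1 -?catA ?cat_cons ?cat0s ?cats0.

Lemma NF_step L e a v :
  Rel n (W L ++ ye e ++ a :: v)
        (W (nstep n (L, e) a).1 ++ ye (nstep n (L, e) a).2 ++ v).
Proof.
case: e; case: a => [[] []]; rewrite /nstep /ye [(_, _).1]/= [(_, _).2]/=; wnorm.
-
  apply: (Rel_red hn); apply: rc_cat; exact: rc_pair.
-
  apply: Rel_trans; first exact: (Rel_ins hn (W L) [:: Y, Y & v]).
  rewrite xpowP rel1E; wnorm.
  apply: (Rel_red hn); apply: rc_cat; apply: rc_cat.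
  by rewrite rc_pair (rc_cons _ (rc_pair' _ _)) rc_pair'.
-
  apply: (Rel_red hn); apply: rc_cat; apply: rc_cons; apply: rc_cons; by rewrite rc_pair'.
-
  apply: (Rel_red hn); apply: rc_cat; apply: rc_cons; apply: rc_cons; by rewrite rc_pair'.
-
  apply: Rel_trans.
    by have := Rel_insi hn (W L ++ [:: linv Y]) v; rewrite -catA cat_cons cat0s; apply.
  rewrite xpowNn finv_rel1; wnorm.
  apply: (Rel_red hn); apply: rc_cat; rewrite rc_pair'; apply: rc_cons; apply: rc_cat.
  by rewrite rc_pair'.
-
  by apply: Rel_refl.
-
  apply: (Rel_red hn); apply: rc_cat; apply: rc_cons; by rewrite rc_pair.
-
  apply: (Rel_red hn); apply: rc_cat; apply: rc_cons; by rewrite rc_pair.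
Qed.

Lemma NF w v : Rel n (w ++ v) (W (nf n w).1 ++ ye (nf n w).2 ++ v).
Proof.
elim/last_ind: w v => [|w a IH] v; first exact: Rel_refl.
rewrite /nf foldl_rcons -/(nf n w) cat_rcons.
apply: Rel_trans; first exact: IH.
case E: (nf n w) => [L e].
exact: NF_step.
Qed.
End NF.

Local Close Scope ring_scope.

Local Open Scope ring_scope.

Definition s1 (L : seq (int * int)) : int := foldr (fun p s => p.1 + s) 0 L.
Definition s2 (L : seq (int * int)) : int := foldr (fun p s => p.2 + s) 0 L.

Lemma s1_cat L1 L2 : s1 (L1 ++ L2) = s1 L1 + s1 L2.
Proof. by elim: L1 => /= [|b L IH]; rewrite ?add0r // IH addrA. Qed.
Lemma s2_cat L1 L2 : s2 (L1 ++ L2) = s2 L1 + s2 L2.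
Proof. by elim: L1 => /= [|b L IH]; rewrite ?add0r // IH addrA. Qed.
Lemma s1_rcons L b : s1 (rcons L b) = s1 L + b.1.
Proof. by rewrite -cats1 s1_cat /= addr0. Qed.
Lemma s2_rcons L b : s2 (rcons L b) = s2 L + b.2.
Proof. by rewrite -cats1 s2_cat /= addr0. Qed.

Lemma weight_block n c d : weight n (Pn_block c d) = 2 * (c + d).
Proof.
rewrite /Pn_block !weight_cat !weight_xpow /=; lia.
Qed.

Lemma weight_W n L : weight n (W L) = 2 * (s1 L + s2 L).
Proof.
elim: L => [|b L IH] /=; first by rewrite mulr0.
rewrite W_cons weight_cat IH weight_block; lia.
Qed.

Section EvW.
Variable n : nat.
Hypothesis hn : (1 < 2 * n)%N.

Lemma ev_block c d z e : @ev n (Pn_block c d) (z, e) = (z + c%:~R - d%:~R, e).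
Proof.
rewrite /Pn_block !ev_cat; case: e; rewrite /= ev_xpow /= ev_xpow; congr (_, _).
  ring.
rewrite -[RHS](Zdbl hn); ring.
Qed.

Lemma ev_W L z e : @ev n (W L) (z, e) = (z + (s1 L - s2 L)%:~R, e).
Proof.
elim: L z => [|b L IH] z /=; first by rewrite addr0.
rewrite W_cons ev_cat IH ev_block !rmorphB !rmorphD /=; congr (_, _); ring.
Qed.
End EvW.

Local Close Scope ring_scope.

Local Open Scope ring_scope.

Lemma red_xpow_add u a b v :
  reduce (u ++ xpow a ++ xpow b ++ v) = reduce (u ++ xpow (a + b) ++ v).
Proof. by have := @reduce_ctx u _ _ v (xpow_add a b); rewrite -catA. Qed.

Lemma blk_mergeA c c' d' T :
  reduce (Pn_block c 0 ++ Pn_block c' d' ++ T) = reduce (Pn_block (c + c') d' ++ T).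
Proof.
rewrite /Pn_block xpow0 -!catA !cat_cons !cat0s.
rewrite (red_cancel (xpow c)).
by have := red_xpow_add [::] c c' ([:: Y] ++ xpow d' ++ [:: linv Y] ++ T).
Qed.

Lemma blk_mergeB c d d' T :
  reduce (Pn_block c d ++ Pn_block 0 d' ++ T) = reduce (Pn_block c (d + d') ++ T).
Proof.
rewrite /Pn_block xpow0 -!catA !cat_cons !cat0s.
have h := red_cancel' (xpow c ++ Y :: xpow d) (xpow d' ++ linv Y :: T) Y.
rewrite -!catA !cat_cons in h; rewrite h.
have := red_xpow_add (xpow c ++ [:: Y]) d d' ([:: linv Y] ++ T).
by rewrite -!catA !cat_cons !cat0s.
Qed.

Lemma finv_nseqX m : finv (nseq m X) = nseq m (linv X).
Proof. by rewrite /finv map_nseq rev_nseq. Qed.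

Section Shift.
Variable n : nat.
Hypothesis hn : (1 < 2 * n)%N.

Lemma Rel_eq a b a' b' : a = a' -> b = b' -> Rel n a' b' -> Rel n a b.
Proof. by move=> -> ->. Qed.

Lemma shift1 L : Rel n (W L) (W ((n%:Z, - n%:Z) :: L)).
Proof.
apply: Rel_trans; first exact: (Rel_eq (cat0s _) (erefl _) (Rel_ins hn [::] (W L))).
apply: (@Rel_trans _ _ ((nseq n X ++ [:: linv Y; linv Y; Y]) ++ [:: linv Y] ++ W L)).
  apply: (Rel_red hn); rewrite rel1E -!catA !cat_cons !cat0s; apply: rc_cat.
  by rewrite (rc_cons _ (rc_cons _ (rc_pair _ _))).
apply: Rel_trans; first exact: (Rel_insi hn _ _).
rewrite W_cons /Pn_block /= xpowP xpowNn finv_rel1.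
apply: (Rel_red hn); rewrite -!catA !cat_cons !cat0s; apply: rc_cat.
by rewrite -!catA !cat_cons (rc_cons _ (rc_pair' _ _)) rc_pair'.
Qed.

Lemma shift2 L : Rel n (W L) (W ((- n%:Z, n%:Z) :: L)).
Proof.
apply: (@Rel_trans _ _ (nseq n (linv X) ++ nseq n X ++ W L)).
  apply: (Rel_red hn).
  by have := red_fww [::] (nseq n X) (W L); rewrite finv_nseqX.
apply: Rel_trans; first exact: (Rel_insi hn _ _).
apply: (@Rel_trans _ _ ((nseq n (linv X) ++ [:: Y]) ++ [:: Y] ++ W L)).
  apply: (Rel_red hn); rewrite finv_rel1 -!catA !cat_cons !cat0s; apply: rc_cat.
  apply: rc_cons; apply: rc_cons.
  by have := red_fww [::] (nseq n X) (W L); rewrite finv_nseqX.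
apply: Rel_trans; first exact: (Rel_ins hn _ _).
rewrite W_cons /Pn_block /= xpowP xpowNn rel1E.
apply: (Rel_red hn); rewrite -!catA !cat_cons !cat0s; apply: rc_cat.
rewrite -!catA; apply: rc_cons; apply: rc_cat.
by apply: rc_cons; rewrite rc_pair'.
Qed.

Lemma shift_iter b k L : (forall L, Rel n (W L) (W (b :: L))) ->
  Rel n (W L) (W (nseq k b ++ L)).
Proof.
move=> H; elim: k => [|k IH]; first exact: Rel_refl.
exact: Rel_trans IH (H _).
Qed.
End Shift.

Local Close Scope ring_scope.

Local Open Scope ring_scope.

Definition nz (b : int * int) := (b.1 != 0) && (b.2 != 0).

Fixpoint goodT (L : seq (int * int)) : bool :=
  match L with
  | b :: ((_ :: _) as L') => nz b && goodT L'
  | _ => true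
  end.

Definition good0 (N : seq (int * int)) :=
  match N with
  | [::] => false
  | b :: N' => ((N' == [::]) || (b.2 != 0)) && goodT N'
  end.

Lemma norm0 L : L != [::] -> exists N,
  [/\ good0 N, reduce (W L) = reduce (W N), s1 N = s1 L & s2 N = s2 L].
Proof.
elim: L => // b L IH _.
case: L IH => [|b1 L] IH; first by exists [:: b]; split.
have [N [gN eN e1 e2]] := IH erefl.
case: N gN eN e1 e2 => // b' N'' /andP[h1 h2] eN e1 e2.
have eW: reduce (W (b :: b1 :: L)) = reduce (Pn_block b.1 b.2 ++ W (b' :: N'')).
  by rewrite W_cons; apply: rc_cat.
case: b eW => c d eW /=.
case: b' h1 eN e1 e2 eW => c' d' h1 eN e1 e2 eW /=.
case: (d =P 0) => [d0|dn0].
  exists ((c + c', d') :: N''); split => //=.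
  - by rewrite h1 h2.
  - by rewrite eW W_cons d0 blk_mergeA.
  - move: e1 e2 => /= e1 e2; lia.
  - move: e1 e2 => /= e1 e2; lia.
case: (c' =P 0) => [c0|cn0]; last first.
  exists ((c, d) :: (c', d') :: N''); split.
  - rewrite /good0 /=; apply/andP; split; first by apply/eqP.
    case: N'' h1 h2 {eN e1 e2 eW} => // x N3 /= h1 ->.
    by rewrite andbT /nz /= h1 andbT; apply/eqP.
  - by rewrite [in RHS]W_cons; exact: eW.
  - move: e1 e2 => /= e1 e2; lia.
  - move: e1 e2 => /= e1 e2; lia.
case: N'' h1 h2 eN e1 e2 eW => [|b'' N3] h1 h2 eN e1 e2 eW.
  exists [:: (c, d + d')]; split => //=.
  - transitivity (reduce (Pn_block c d ++ Pn_block 0 d' ++ [::])); first by rewrite eW c0.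
    by rewrite blk_mergeB /W /= !cats0.
  - move: e1 e2 => /= e1 e2; lia.
  - move: e1 e2 => /= e1 e2; lia.
case: (d + d' =P 0) => [s0|sn0].
  exists ((c + b''.1, b''.2) :: N3); split => //=.
  - case: N3 h1 h2 {eN e1 e2 eW} => [|b3 N3'] _ //= /andP[/andP[_ ->] ->].
    by [].
  - transitivity (reduce (Pn_block c d ++ Pn_block 0 d' ++ Pn_block b''.1 b''.2 ++ W N3)).
      by rewrite eW c0.
    by rewrite blk_mergeB s0 blk_mergeA.
  - move: e1 e2 => /= e1 e2; lia.
  - move: e1 e2 => /= e1 e2; lia.
exists ((c, d + d') :: b'' :: N3); split => //=.
- by apply/andP; split; [apply/eqP | exact: h2].
- transitivity (reduce (Pn_block c d ++ Pn_block 0 d' ++ W (b'' :: N3))); first by rewrite eW c0.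
  by rewrite blk_mergeB.
  - move: e1 e2 => /= e1 e2; lia.
  - move: e1 e2 => /= e1 e2; lia.
Qed.

Lemma goodT_rcons N2 bl : goodT (rcons N2 bl) -> all nz N2.
Proof.
elim: N2 => // b N2 IH.
rewrite rcons_cons.
case E: (rcons N2 bl) => [|x y]; first by case: N2 E {IH}.
move=> /= /andP[-> H] /=.
by apply: IH; rewrite E.
Qed.

Lemma rot_final n (hn : (1 < 2 * n)%N) N : good0 N -> exists N0 a b',
  [/\ all nz N0, Rel n (W N) (W N0 ++ Pn_block a b'), s1 N0 + a = s1 N
    & s2 N0 + b' = s2 N].
Proof.
case: N => // b0 N1.
case/lastP: N1 => [|N2 bl] /=.
  move=> _; exists [::], b0.1, b0.2; split => //=; rewrite ?addr0 ?add0r //.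
  by rewrite /W /= cats0; apply: Rel_refl.
have -> : (rcons N2 bl == [::]) = false by case: N2.
move=> /andP[hb0 /goodT_rcons hN2].
case: (b0.1 =P 0) => [c0|cn0].
  exists N2, bl.1, (bl.2 + b0.2); split => //.
  - rewrite W_cons.
    apply: Rel_trans; first exact: Rel_rot.
    apply: (Rel_red hn).
    rewrite W_rcons c0 -catA; apply: rc_cat; rewrite -(cats0 (Pn_block 0 _)) blk_mergeB.
    by rewrite cats0.
  - by rewrite /= s1_rcons c0; ring.
  - by rewrite /= s2_rcons; ring.
exists (b0 :: N2), bl.1, bl.2; split.
- rewrite /= hN2 andbT /nz andbC -(orFb (b0.2 != 0)) hb0 /=; by apply/eqP.
- by rewrite W_cons W_rcons W_cons catA; apply: Rel_refl.
- by rewrite /= s1_rcons; ring.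
- by rewrite /= s2_rcons; ring.
Qed.

Local Close Scope ring_scope.

Local Open Scope ring_scope.

Lemma Zp_int0 p (z : int) : (1 < p)%N -> (z%:~R : 'Z_p) = 0 -> (p%:Z %| z)%Z.
Proof.
move=> hp; case: z => m.
  move=> /(congr1 val); rewrite /= -pmulrn val_Zp_nat // => /eqP.
  by rewrite -/(dvdn p m) => h; rewrite dvdzE /=.
rewrite NegzE mulrNz => /eqP; rewrite oppr_eq0 => /eqP /(congr1 val).
rewrite /= -pmulrn val_Zp_nat // => /eqP; rewrite -/(dvdn p m.+1) => h.
by rewrite rpredN dvdzE /=.
Qed.

Lemma s1_nseq k b L : s1 (nseq k b ++ L) = k%:Z * b.1 + s1 L.
Proof. elim: k => [|k IH] /=; first by rewrite mul0r add0r. rewrite IH; lia. Qed.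
Lemma s2_nseq k b L : s2 (nseq k b ++ L) = k%:Z * b.2 + s2 L.
Proof. elim: k => [|k IH] /=; first by rewrite mul0r add0r. rewrite IH; lia. Qed.

Lemma sum_map1 (N : seq (int * int)) : \sum_(z <- map fst N) z = s1 N.
Proof. elim: N => [|b N IH]; by rewrite ?big_nil // big_cons IH. Qed.
Lemma sum_map2 (N : seq (int * int)) : \sum_(z <- map snd N) z = s2 N.
Proof. elim: N => [|b N IH]; by rewrite ?big_nil // big_cons IH. Qed.

Lemma ev_W0 n (hn : (1 < 2 * n)%N) L : @ev n (W L) (0, false) = ((s1 L - s2 L)%:~R, false).
Proof. by rewrite ev_W // add0r. Qed.

Local Close Scope ring_scope.
Theorem theorem3p1 (n : nat) (R : word) :
  2 <= n -> regular n R ->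
  exists ns ms : seq int,
    size ns = size ms /\
    all (fun z => z != 0%R) ns /\ all (fun z => z != 0%R) ms /\
    Qeq [:: rel1 n; reduce R] (Pn_pres n ns ms).
Proof.
Local Open Scope ring_scope.
move=> hn2 reg.
have hn : (1 < 2 * n)%N by lia.
have hR0 : ncl [:: rel1 n; relQ] (reduce R).
  apply/(reg R); apply: ncl_mem; last exact: reduced_reduce.
  by rewrite !inE eqxx orbT.
have hQ : ncl [:: rel1 n; reduce R] relQ.
  have := (reg relQ).2; rewrite [reduce relQ]/=; apply.
  by apply: ncl_mem => //; rewrite !inE eqxx orbT.
have w4 : (4 %| weight n (reduce R))%Z.
  apply: (ncl_weight hR0) => s; rewrite !inE => /orP[] /eqP ->.
    by rewrite weight_rel1 dvdz0.
  have ->: weight n relQ = 4 by rewrite /= ; lia.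
  exact: dvdzz.
have hq4 : weight n relQ = 4 by rewrite /=; lia.
have w4' : (weight n (reduce R) %| weight n relQ)%Z.
  apply: (ncl_weight hQ) => s; rewrite !inE => /orP[] /eqP ->.
    by rewrite weight_rel1 dvdz0.
  exact: dvdzz.
have wpm : weight n (reduce R) = 4 \/ weight n (reduce R) = -4.
  case/dvdzP: w4 => k hk; case/dvdzP: w4' => j hj.
  rewrite hq4 hk in hj *.
  have hjk : j * k = 1 by lia.
  have : (k %| 1)%Z by apply/dvdzP; exists j; rewrite hjk.
  rewrite dvdz1 => /eqP hk1; lia.
have evR : evid n (reduce R).
  apply: (ncl_evid hn hR0) => s; rewrite !inE => /orP[] /eqP ->.
    exact: evid_rel1.
  exact: evid_relQ.
have [A [QA IA]] : exists A, Qeq [:: rel1 n; reduce R] [:: rel1 n; reduce A] /\ Inv n A.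
  case: wpm => hw.
    exists (reduce R); split; last by split.
    by rewrite reduceK; apply: rt_refl.
  exists (finv (reduce R)); split.
    apply: rt_step; exact: (@qm_inv [:: rel1 n; reduce R] 1 erefl).
  split; first by rewrite weight_finv hw; lia.
  by move=> s; rewrite -{1}(evR s) ev_finvK.
have RNF := NF hn A [::].
rewrite cats0 in RNF.
case ENF: (nf n A) RNF => [L e] RNF.
have [IW1 IW2] := RNF.2 IA.
have e0 : e = false.
  case: e ENF RNF IW1 IW2 => // _ _ _ /(_ (0, false)).
  by rewrite ev_cat /= ev_W.
subst e; rewrite /ye /= cats0 in RNF IW1 IW2.
rewrite weight_W in IW1.
have hs : s1 L + s2 L = 2 by lia.
have hd : ((2 * n)%:Z %| s1 L - s2 L)%Z.
  apply: (Zp_int0 hn).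
  have := IW2 (0, false); rewrite ev_W0 //.
  by case.
have [L' [RL' h1 h2]] : exists L', [/\ Rel n (W L) (W L'), s1 L' = 1 & s2 L' = 1].
  case/dvdzP: hd => t ht.
  case: (lerP 0 t) => ht0.
    exists (nseq `|t|%N (- n%:Z, n%:Z) ++ L); split.
    - apply: shift_iter => L0; exact: shift2.
    - rewrite s1_nseq /= gez0_abs //; lia.
    - rewrite s2_nseq /= gez0_abs //; lia.
  exists (nseq `|t|%N (n%:Z, - n%:Z) ++ L); split.
  - apply: shift_iter => L0; exact: shift1.
  - rewrite s1_nseq /= ltz0_abs //; lia.
  - rewrite s2_nseq /= ltz0_abs //; lia.
have L'0 : L' != [::] by case: L' h1 {RL' h2}.
have [N [gN eN hN1 hN2]] := norm0 L'0.
have [N0 [a [b [nzN0 RN hN01 hN02]]]] := rot_final hn gN.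
exists (map fst N0), (map snd N0); split; first by rewrite !size_map.
split.
  rewrite all_map; apply: sub_all nzN0 => x /andP[].
  by [].
split.
  rewrite all_map; apply: sub_all nzN0 => x /andP[].
  by [].
have RA : Rel n A (W N0 ++ Pn_block a b).
  apply: Rel_trans RNF _; apply: Rel_trans RL' _.
  apply: Rel_trans _ RN; exact: (Rel_red hn).
apply: rt_trans QA _.
have ->: Pn_pres n (map fst N0) (map snd N0) = [:: rel1 n; reduce (W N0 ++ Pn_block a b)].
  rewrite /Pn_pres /Pn_rel zip_unzip sum_map1 sum_map2.
  have ->: a = 1 - s1 N0 by lia.
  have ->: b = 1 - s2 N0 by lia.
  by [].
exact: RA.1.
Qed.

Local Close Scope ring_scope.
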